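(* Let $f(\cdot;\theta_A)$, $\theta_A\in\mathbb R^{M_A}$ (model A), and $g(\cdot;\theta_B)$, $\theta_B\in\mathbb R^{M_B}$ (model B), be models on $\mathbb R^d$, and suppose there exists a critical mapping $\mathcal P:\mathbb R^{M_A}\to\mathbb R^{M_B}$ from model A to model B. Then for every $f^*\in\mathcal F_A=\{f(\cdot;\theta_A):\theta_A\in\mathbb R^{M_A}\}$ we have $f^*\in\mathcal F_B$ and $O_g(f^* )\leq O_f(f^* )\leq M_A$.
   Context: A model is a map $h:\mathbb R^d\times\mathbb R^M\to\mathbb R$, $(x,\theta)\mapsto h(x;\theta)=h_\theta(x)$, differentiable in both $x$ and $\theta$; its function space is $\{h_\theta:\theta\in\mathbb R^M\}$. A map $\mathcal P:\mathbb R^{M_A}\to\mathbb R^{M_B}$ is a critical mapping from model A ($f$) to model B ($g$) if for every $\theta\in\mathbb R^{M_A}$: (i) $f(\cdot;\theta)=g(\cdot;\mathcal P(\theta))$; (ii) for every finite dataset $S=\{(x_i,y_i)\}_{i=1}^n\subset\mathbb R^d\times\mathbb R$ with mean-squared risk $R_S(h)=\frac12\sum_{i=1}^n(h(x_i)-y_i)^2$, if the gradient of $\theta_A\mapsto R_S(f(\cdot;\theta_A))$ vanishes at $\theta$, then the gradient of $\theta_B\mapsto R_S(g(\cdot;\theta_B))$ vanishes at $\mathcal P(\theta)$. The loss $\ell:\mathbb R\times\mathbb R\to[0,\infty)$ is continuously differentiable with $\ell(u,v)=0$ iff $u=v$. For a model $h$ and $f^*$ in its function space, the target set is $\mathcal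 M_{f^*}=\{\theta:h_\theta=f^*\}$; a dataset from $f^*$ of size $n$ is $\{(x_i,f^*(x_i))\}_{i=1}^n$ with empirical loss $\frac1n\sum_i\ell(u(x_i),f^*(x_i))$ for a function $u$ (identically $0$ if $n=0$); the tangent hyperplane at $\theta'$ is $\{h(\cdot;\theta')+a^\top\nabla_\theta h(\cdot;\theta'):a\in\mathbb R^M\}$; $f^*$ has $n$-sample LLR-guarantee (for model $h$) if there are a dataset of size $n$ from $f^*$ and $\theta'\in\mathcal M_{f^*}$ such that the set of minimizers of the empirical loss over the tangent hyperplane at $\theta'$ is exactly $\{f^*\}$. The optimistic sample size $O_h(f^* )$ is the smallest $n\geq0$ such that $f^*$ has $n$-sample LLR-guarantee for model $h$. *)

(* Defs.v *)
From HB Require Import structures.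
From mathcomp Require Import all_boot all_order all_algebra.
From mathcomp Require Import all_classical all_reals all_analysis.
Set Implicit Arguments. Unset Strict Implicit. Unset Printing Implicit Defensive.
Import Order.TTheory GRing.Theory Num.Theory.
Import numFieldNormedType.Exports.
Local Open Scope ring_scope.
Local Open Scope classical_set_scope.

Section Defs.
Variable R : realType.

Definition is_model (d M : nat) (h : 'rV[R]_d -> 'rV[R]_M -> R) : Prop :=
  (forall (x : 'rV[R]_d) (th : 'rV[R]_M), differentiable (h x) th) /\
  (forall (th : 'rV[R]_M) (x : 'rV[R]_d), differentiable (fun z => h z th) x).

Definition pgrad (d M : nat) (h : 'rV[R]_d -> 'rV[R]_M -> R)
  (x : 'rV[R]_d) (th : 'rV[R]_M) (i : 'I_M) : R :=
  derive (h x) th (delta_mx 0 i).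

Definition sq_risk (d : nat) (S : seq ('rV[R]_d * R)) (u : 'rV[R]_d -> R) : R :=
  2^-1 * \sum_(p <- S) (u p.1 - p.2) ^+ 2.

Definition risk_grad_vanishes (d M : nat) (h : 'rV[R]_d -> 'rV[R]_M -> R)
  (S : seq ('rV[R]_d * R)) (th : 'rV[R]_M) : Prop :=
  forall i : 'I_M,
    derive (fun t : 'rV[R]_M => sq_risk S (fun x => h x t)) th (delta_mx 0 i) = 0.

(* critical mapping from model A (f) to model B (g); a finite dataset is a
   finite set of pairs, represented as a duplicate-free list *)
Definition critical_mapping (d MA MB : nat)
  (f : 'rV[R]_d -> 'rV[R]_MA -> R) (g : 'rV[R]_d -> 'rV[R]_MB -> R)
  (P : 'rV[R]_MA -> 'rV[R]_MB) : Prop :=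
  forall th : 'rV[R]_MA,
    (fun x => f x th) = (fun x => g x (P th)) /\
    (forall S : seq ('rV[R]_d * R), uniq S ->
        risk_grad_vanishes f S th -> risk_grad_vanishes g S (P th)).

Definition is_loss (l : R -> R -> R) : Prop :=
  (forall u v, 0 <= l u v) /\
  (forall u v, l u v = 0 <-> u = v) /\
  (forall u v, derivable (fun w => l w v) u 1) /\
  (forall u v, derivable (fun w => l u w) v 1) /\
  continuous (fun p : R * R => derive (fun w => l w p.2) p.1 1) /\
  continuous (fun p : R * R => derive (fun w => l p.1 w) p.2 1).

(* empirical loss on the dataset {(xs i, fstar (xs i))}_{i<n}; 0 if n = 0 *)
Definition emp_loss (d n : nat) (l : R -> R -> R) (fstar : 'rV[R]_d -> R)
  (xs : 'I_n -> 'rV[R]_d) (u : 'rV[R]_d -> R) : R :=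
  if n == 0%N then 0 else n%:R^-1 * \sum_(i < n) l (u (xs i)) (fstar (xs i)).

Definition target_set (d M : nat) (h : 'rV[R]_d -> 'rV[R]_M -> R)
  (fstar : 'rV[R]_d -> R) : set 'rV[R]_M :=
  [set th | (fun x => h x th) = fstar].

Definition tangent_hyperplane (d M : nat) (h : 'rV[R]_d -> 'rV[R]_M -> R)
  (th' : 'rV[R]_M) : set ('rV[R]_d -> R) :=
  [set u | exists a : 'rV[R]_M,
     u = (fun x => h x th' + \sum_(i < M) a 0 i * pgrad h x th' i)].

(* fstar has n-sample LLR-guarantee for model h (w.r.t. loss l); a dataset of
   size n is given by n pairwise distinct inputs *)
Definition LLR_guarantee (d M : nat) (h : 'rV[R]_d -> 'rV[R]_M -> R)
  (l : R -> R -> R) (fstar : 'rV[R]_d -> R) (n : nat) : Prop :=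
  exists (xs : 'I_n -> 'rV[R]_d) (th' : 'rV[R]_M),
    injective xs /\ target_set h fstar th' /\
    (forall u : 'rV[R]_d -> R,
       (tangent_hyperplane h th' u /\
        (forall v, tangent_hyperplane h th' v ->
            emp_loss l fstar xs u <= emp_loss l fstar xs v))
       <-> u = fstar).

Definition is_optimistic_sample_size (d M : nat) (h : 'rV[R]_d -> 'rV[R]_M -> R)
  (l : R -> R -> R) (fstar : 'rV[R]_d -> R) (n : nat) : Prop :=
  LLR_guarantee h l fstar n /\
  (forall m, LLR_guarantee h l fstar m -> (n <= m)%N).

End Defs.

(* Main.v *)
Require Import Defs.
From HB Require Import structures.
From mathcomp Require Import all_boot all_order all_algebra.
From mathcomp Require Import all_classical all_reals all_analysis.
Import Order.TTheory GRing.Theory Num.Theory.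
Local Open Scope ring_scope.
Import numFieldNormedType.Exports.
Set Implicit Arguments. Unset Strict Implicit. Unset Printing Implicit Defensive.

Lemma sum_is_derive (R : realType) (d M : nat) (h : 'rV[R]_d -> 'rV[R]_M -> R)
  (th v : 'rV[R]_M) (S : seq ('rV[R]_d * R)) :
  (forall x, differentiable (h x) th) ->
  is_derive th v (fun t => \sum_(p <- S) (h p.1 t - p.2) ^+ 2)
    (\sum_(p <- S) (2 * (h p.1 th - p.2)) * 'D_v (h p.1) th).
Proof.
move=> dh; elim: S => [|p S IH].
  under eq_fun do rewrite big_nil.
  rewrite big_nil; exact: is_derive_cst.
under eq_fun do rewrite big_cons.
rewrite big_cons.
have hp : is_derive th v (h p.1) ('D_v (h p.1) th).
  by apply: derivableP; apply: diff_derivable.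
have h1 : is_derive th v (h p.1 - cst p.2) ('D_v (h p.1) th - 0).
  exact: is_deriveB.
have h2 := is_deriveX 2 h1.
have h3 := is_deriveD h2 IH.
apply: is_derive_eq.
  rewrite subr0 /= expr1 -mulr_natl.
  by rewrite /GRing.scale /=.
Qed.

Lemma risk_derive (R : realType) (d M : nat) (h : 'rV[R]_d -> 'rV[R]_M -> R)
  (th v : 'rV[R]_M) (S : seq ('rV[R]_d * R)) :
  (forall x, differentiable (h x) th) ->
  derive (fun t => sq_risk S (fun x => h x t)) th v =
    \sum_(p <- S) (h p.1 th - p.2) * derive (h p.1) th v.
Proof.
move=> dh; have H := @sum_is_derive R d M h th v S dh.
have H2 := is_deriveZ (2^-1 : R) H.
rewrite /sq_risk.
have -> : (fun t => 2^-1 * \sum_(p <- S) (h p.1 t - p.2) ^+ 2) =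
   (2^-1 : R) \*: (fun t => \sum_(p <- S) (h p.1 t - p.2) ^+ 2) by [].
rewrite derive_val /GRing.scale /= big_distrr /=; apply: eq_bigr => p _.
by rewrite mulrA mulrA mulVf ?mul1r // pnatr_eq0.
Qed.

Definition tgt (R : realType) (d M : nat) (h : 'rV[R]_d -> 'rV[R]_M -> R)
  (th : 'rV[R]_M) (x : 'rV[R]_d) (a : 'rV[R]_M) : R :=
  \sum_(i < M) a 0 i * pgrad h x th i.

Definition Qp (R : realType) (d M : nat) (h : 'rV[R]_d -> 'rV[R]_M -> R)
  (th : 'rV[R]_M) (n : nat) (xs : 'I_n -> 'rV[R]_d) : Prop :=
  forall a : 'rV[R]_M, (forall i, tgt h th (xs i) a = 0) -> forall x, tgt h th x a = 0.

Definition Amx (R : realType) (d M : nat) (h : 'rV[R]_d -> 'rV[R]_M -> R)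
  (th : 'rV[R]_M) (n : nat) (xs : 'I_n -> 'rV[R]_d) : 'M[R]_(n, M) :=
  \matrix_(i, j) pgrad h (xs i) th j.

Definition gvec (R : realType) (d M : nat) (h : 'rV[R]_d -> 'rV[R]_M -> R)
  (th : 'rV[R]_M) (x : 'rV[R]_d) : 'rV[R]_M := \row_j pgrad h x th j.

Lemma tgtE (R : realType) (d M : nat) (h : 'rV[R]_d -> 'rV[R]_M -> R)
  (th : 'rV[R]_M) x (a : 'rV[R]_M) : tgt h th x a = (gvec h th x *m a^T) 0 0.
Proof. rewrite /tgt mxE; apply: eq_bigr => i _; rewrite !mxE mulrC //. Qed.

Lemma Amx_tgt (R : realType) (d M : nat) (h : 'rV[R]_d -> 'rV[R]_M -> R)
  (th : 'rV[R]_M) n (xs : 'I_n -> 'rV[R]_d) (a : 'rV[R]_M) i :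
  (Amx h th xs *m a^T) i 0 = tgt h th (xs i) a.
Proof. rewrite tgtE !mxE; apply: eq_bigr => j _; rewrite !mxE //. Qed.

Lemma Qp_span (R : realType) (d M : nat) (h : 'rV[R]_d -> 'rV[R]_M -> R)
  (th : 'rV[R]_M) n (xs : 'I_n -> 'rV[R]_d) :
  Qp h th xs -> forall x, (gvec h th x <= Amx h th xs)%MS.
Proof.
move=> Q x; rewrite submxE; apply/eqP/matrixP => i j; rewrite [i]ord1.
set C := cokermx _.
have e1 : forall y, tgt h th y (col j C)^T = (gvec h th y *m C) 0 j.
  by move=> y; rewrite tgtE trmxK !mxE; apply: eq_bigr => k _; rewrite !mxE.
rewrite -e1 mxE; apply: Q => k.
rewrite e1.
have -> : (gvec h th (xs k) *m C) 0 j = (Amx h th xs *m C) k j.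
  by rewrite !mxE; apply: eq_bigr => m _; rewrite !mxE.
by rewrite mulmx_coker mxE.
Qed.

Lemma span_tgt (R : realType) (d M : nat) (h : 'rV[R]_d -> 'rV[R]_M -> R)
  (th : 'rV[R]_M) n (xs : 'I_n -> 'rV[R]_d) x (a : 'rV[R]_M) :
  (gvec h th x <= Amx h th xs)%MS -> (forall i, tgt h th (xs i) a = 0) ->
  tgt h th x a = 0.
Proof.
move=> /submxP [c e] H; rewrite tgtE e -mulmxA.
have -> : Amx h th xs *m a^T = 0.
  by apply/matrixP => i j; rewrite [j]ord1 Amx_tgt H mxE.
by rewrite mulmx0 mxE.
Qed.

Lemma emp_loss_ge0 (R : realType) d n (l : R -> R -> R) fstar (xs : 'I_n -> 'rV[R]_d) u :
  is_loss l -> 0 <= emp_loss l fstar xs u.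
Proof.
move=> [l0 _]; rewrite /emp_loss; case: ifP => // _.
by apply: mulr_ge0; [rewrite invr_ge0 ler0n | apply: sumr_ge0 => i _].
Qed.

Lemma emp_loss_self (R : realType) d n (l : R -> R -> R) fstar (xs : 'I_n -> 'rV[R]_d) :
  is_loss l -> emp_loss l fstar xs fstar = 0.
Proof.
move=> [_ [le _]]; rewrite /emp_loss; case: ifP => // _.
by rewrite big1 ?mulr0 // => i _; apply/le.
Qed.

Lemma emp_loss_le0 (R : realType) d n (l : R -> R -> R) fstar (xs : 'I_n -> 'rV[R]_d) u :
  is_loss l -> (0 < n)%N -> emp_loss l fstar xs u <= 0 ->
  forall i, u (xs i) = fstar (xs i).
Proof.
move=> [l0 [le _]] n0; rewrite /emp_loss; case: ifP => [/eqP E|_]; first by rewrite E in n0.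
rewrite pmulr_rle0 ?invr_gt0 ?ltr0n // => H i.
apply/le; apply/eqP; rewrite eq_le l0 andbT.
have E : \sum_(j < n) l (u (xs j)) (fstar (xs j)) = 0.
  by apply/eqP; rewrite eq_le H sumr_ge0.
by rewrite (psumr_eq0P (fun j _ => l0 (u (xs j)) (fstar (xs j))) E).
Qed.

Lemma LLR_iff (R : realType) d M (h : 'rV[R]_d -> 'rV[R]_M -> R) l fstar n :
  is_loss l ->
  (LLR_guarantee h l fstar n <->
   exists (xs : 'I_n -> 'rV[R]_d) th', injective xs /\ target_set h fstar th' /\ Qp h th' xs).
Proof.
move=> hl; split.
  move=> [xs [th' [inj [tg H]]]]; exists xs, th'; split => //; split => //.
  move=> a Ha x.
  pose u := fun x => h x th' + tgt h th' x a.
  have : u = fstar.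
    apply/H; split; first by exists a.
    move=> v _.
    have -> : emp_loss l fstar xs u = emp_loss l fstar xs fstar.
      rewrite /emp_loss /u; case: ifP => // _; congr (_ * _); apply: eq_bigr => i _.
      by rewrite Ha addr0 -tg.
    by rewrite emp_loss_self // emp_loss_ge0.
  move=> /(congr1 (fun F => F x)); rewrite /u -tg /= => E.
  by apply: (addrI (h x th')); rewrite addr0.
move=> [xs [th' [inj [tg Q]]]]; exists xs, th'; split => //; split => //.
move=> u; split.
  move=> [[a ->] Hmin].
  have hf : tangent_hyperplane h th' fstar.
    exists 0; rewrite -tg; apply: funext => x; rewrite big1 ?addr0 // => i _.
    by rewrite mxE mul0r.
  have H0 := Hmin _ hf; rewrite emp_loss_self // in H0.
  have Ha : forall x, tgt h th' x a = 0.
    apply: Q => i.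
    have [n0|n0] := posnP n; first by move: (ltn_ord i); rewrite {2}n0.
    have := emp_loss_le0 hl n0 H0 i.
    rewrite -tg /= => E.
    by apply: (addrI (h (xs i) th')); rewrite addr0.
  rewrite -tg; apply: funext => x /=; have := Ha x; rewrite /tgt => ->.
  by rewrite addr0.
move=> ->; split.
  exists 0; rewrite -tg; apply: funext => x; rewrite big1 ?addr0 // => i _.
  by rewrite mxE mul0r.
by move=> v _; rewrite emp_loss_self // emp_loss_ge0.
Qed.

Definition mkS (R : realType) d n (F : 'rV[R]_d -> R) (xs : 'I_n -> 'rV[R]_d)
  (c : 'rV[R]_n) x : seq ('rV[R]_d * R) :=
  (x, F x + 1) :: [seq (xs i, F (xs i) - c 0 i) | i <- enum 'I_n].

Lemma mkS_sum (R : realType) d M n (h : 'rV[R]_d -> 'rV[R]_M -> R) th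
  (F : 'rV[R]_d -> R) (xs : 'I_n -> 'rV[R]_d) (c : 'rV[R]_n) x k :
  (fun y => h y th) = F ->
  \sum_(p <- mkS F xs c x) (h p.1 th - p.2) * derive (h p.1) th (delta_mx 0 k) =
  - pgrad h x th k + \sum_i c 0 i * pgrad h (xs i) th k.
Proof.
move=> hF; rewrite big_cons big_map big_enum /=.
have e : forall y, h y th = F y by move=> y; rewrite -hF.
rewrite e opprD addrA subrr add0r mulN1r; congr (_ + _).
by apply: eq_bigr => i _; rewrite e opprB addrC subrK.
Qed.

Lemma mkS_uniq (R : realType) d n (F : 'rV[R]_d -> R) (xs : 'I_n -> 'rV[R]_d) c x :
  injective xs -> (forall i, x <> xs i) -> uniq (mkS F xs c x).
Proof.
move=> inj nx /=; apply/andP; split.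
  apply/mapP => -[i _ [E _]]; exact: (nx i E).
rewrite map_inj_uniq ?enum_uniq // => i j [E _]; exact: inj.
Qed.

Lemma QpB (R : realType) d MA MB (f : 'rV[R]_d -> 'rV[R]_MA -> R)
  (g : 'rV[R]_d -> 'rV[R]_MB -> R) P th n (xs : 'I_n -> 'rV[R]_d) :
  is_model f -> is_model g -> critical_mapping f g P -> injective xs ->
  Qp f th xs -> Qp g (P th) xs.
Proof.
move=> [df _] [dg _] cr inj Q a Ha x.
have [[i ->]|nx] := pselect (exists i, x = xs i); first exact: Ha.
have nx' : forall i, x <> xs i by move=> i E; apply: nx; exists i.
have /submxP [c ec] := Qp_span Q x.
have [eq crit] := cr th.
pose F := fun y => f y th.
have S_uniq := mkS_uniq F c inj nx'.
have Hf : risk_grad_vanishes f (mkS F xs c x) th.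
  move=> k; rewrite risk_derive // mkS_sum //.
  have := congr1 (fun m : 'rV[R]_MA => m 0 k) ec; rewrite !mxE => ->.
  rewrite addrC; apply/eqP; rewrite subr_eq0; apply/eqP; apply: eq_bigr => i _; rewrite !mxE.
  by [].
have Hg := crit _ S_uniq Hf.
apply: (span_tgt (xs := xs)) => //; apply/submxP; exists c.
apply/rowP => k; have := Hg k; rewrite risk_derive // (@mkS_sum _ _ _ _ g (P th) F); last exact: esym eq.
rewrite addrC => /eqP; rewrite subr_eq0 => /eqP E; rewrite !mxE -E.
by apply: eq_bigr => i _; rewrite !mxE.
Qed.

Lemma row_Amx (R : realType) d M (h : 'rV[R]_d -> 'rV[R]_M -> R) th n
  (xs : 'I_n -> 'rV[R]_d) i : row i (Amx h th xs) = gvec h th (xs i).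
Proof. by apply/rowP => j; rewrite !mxE. Qed.

Definition sxs (R : realType) d (s : seq 'rV[R]_d) : 'I_(size s) -> 'rV[R]_d :=
  fun i => nth 0 s i.
Arguments sxs {R d} s _.

Lemma step (R : realType) d M (h : 'rV[R]_d -> 'rV[R]_M -> R) th
  (s : seq 'rV[R]_d) : \rank (Amx h th (sxs s)) = size s ->
  ~ Qp h th (sxs s) ->
  exists x, x \notin s /\ \rank (Amx h th (sxs (x :: s))) = (size s).+1.
Proof.
move=> rs nQ.
have [a [Ha [x nx]]] : exists a, (forall i, tgt h th (sxs s i) a = 0) /\
      exists x, tgt h th x a <> 0.
  apply: contra_notP nQ => H a Ha x; apply: contra_notP H => nx.
  by exists a; split => //; exists x.
have ng : ~ (gvec h th x <= Amx h th (sxs s))%MS.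
  by move=> sub; apply: nx; exact: span_tgt sub Ha.
have xs_ : x \notin s.
  apply/negP => xin; apply: ng; rewrite -(nth_index 0 xin).
  have Hi : (index x s < size s)%N by rewrite index_mem.
  have := row_sub (Ordinal Hi) (Amx h th (sxs s)).
  by rewrite row_Amx /sxs /=.
exists x; split => //.
set s' := x :: s.
have sub1 : (Amx h th (sxs s) <= Amx h th (sxs s'))%MS.
  apply/row_subP => i; rewrite row_Amx.
  by have := row_sub (lift ord0 i) (Amx h th (sxs s')); rewrite row_Amx /sxs lift0.
have sub2 : (gvec h th x <= Amx h th (sxs s'))%MS.
  by have := row_sub (ord0 : 'I_(size s')) (Amx h th (sxs s')); rewrite row_Amx.
have lt : (Amx h th (sxs s) < Amx h th (sxs s'))%MS.
  rewrite ltmxE sub1 /=; apply/negP => sub3; apply: ng; exact: submx_trans sub2 sub3.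
move: lt; rewrite ltmxErank sub1 /= => lt.
by apply/eqP; rewrite eqn_leq rank_leq_row /=; move: lt; rewrite rs.
Qed.

Lemma grow (R : realType) d M (h : 'rV[R]_d -> 'rV[R]_M -> R) th k :
  forall s : seq 'rV[R]_d, uniq s -> \rank (Amx h th (sxs s)) = size s ->
  (M - size s <= k)%N ->
  exists s' : seq 'rV[R]_d, uniq s' /\ Qp h th (sxs s') /\ (size s' <= M)%N.
Proof.
elim: k => [|k IH] s us rs sk;
  (have [Q|nQ] := pselect (Qp h th (sxs s));
   [by exists s; split => //; split => //; rewrite -rs rank_leq_col|]);
  have [x [xs_ rs']] := step rs nQ;
  have le' := rank_leq_col (Amx h th (sxs (x :: s))); rewrite rs' in le'.
  by move: sk; rewrite leqn0 subn_eq0 => sk; have := leq_trans le' sk; rewrite ltnn.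
apply: (IH (x :: s)) => //=; first by rewrite xs_.
by move: sk; rewrite subnS; case: (M - size s)%N le' => //= m; rewrite ltnS.
Qed.

Unset Implicit Arguments.

Lemma opt_exists (R : realType) d M (h : 'rV[R]_d -> 'rV[R]_M -> R) l fstar n :
  LLR_guarantee h l fstar n ->
  exists m, is_optimistic_sample_size h l fstar m /\ (m <= n)%N.
Proof.
move=> Ln.
have ex : exists n, (fun n => `[< LLR_guarantee h l fstar n >]) n.
  by exists n; apply/asboolP.
case: (ex_minnP ex) => m /asboolP Lm mn.
exists m; split; last by apply: mn; apply/asboolP.
by split => // k Lk; apply: mn; apply/asboolP.
Qed.
Arguments opt_exists {R d M h l fstar n}.

Theorem mainTheorem10 (R : realType) (d MA MB : nat)
  (f : 'rV[R]_d -> 'rV[R]_MA -> R) (g : 'rV[R]_d -> 'rV[R]_MB -> R)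
  (l : R -> R -> R) (P : 'rV[R]_MA -> 'rV[R]_MB) :
  is_model f -> is_model g -> is_loss l -> critical_mapping f g P ->
  forall fstar : 'rV[R]_d -> R,
    (exists thA : 'rV[R]_MA, fstar = (fun x => f x thA)) ->
    (exists thB : 'rV[R]_MB, fstar = (fun x => g x thB)) /\
    (exists nA nB : nat,
       is_optimistic_sample_size f l fstar nA /\
       is_optimistic_sample_size g l fstar nB /\
       (nB <= nA)%N /\ (nA <= MA)%N).
Proof.
move=> mf mg hl cr fstar [thA ->].
split; first by exists (P thA); case: (cr thA).
have r0 : \rank (Amx f thA (sxs [::])) = size ([::] : seq 'rV[R]_d).
  by apply/eqP; rewrite -leqn0 rank_leq_row.
have [s [us [Qs sz]]] := @grow R d MA f thA MA [::] isT r0 (leq_subr _ _).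
have LA : LLR_guarantee f l (fun x => f x thA) (size s).
  apply/LLR_iff => //; exists (sxs s), thA; split; last by split.
  by move=> i j; rewrite /sxs => /eqP; rewrite nth_uniq // => /eqP /val_inj.
have [nA [[LnA minA] nAs]] := opt_exists LA.
have LB : LLR_guarantee g l (fun x => f x thA) nA.
  move/LLR_iff: LnA => /(_ hl) [xs [th' [inj [tg Q]]]].
  apply/LLR_iff => //; exists xs, (P th'); split => //; split.
    by rewrite /target_set /=; case: (cr th') => <- _.
  exact: QpB mf mg cr inj Q.
have [nB [OB nBA]] := opt_exists LB.
exists nA, nB; split => //; split => //; split => //.
exact: leq_trans nAs sz.
Qed.
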